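(* Let $X$ be a real Banach space. (a) Let $x \in S(X)$ and $f \in S(X^* )$ be such that $f(x) > 0$ and, for some $0<t<2$, $s^*(f,x,t) > 0$. Then \[ \operatorname{diam}\big(S(B(X^* ), x, f(x)(1 - s^*(f,x,t)))\big) < 2t. \] (b) An element $f \in S(X^* )$ is a w*-denting point of $B(X^* )$ if and only if $d^*(f,t) > 0$ for all $0<t<2$.
   Context: $B(\cdot)$, $S(\cdot)$ denote closed unit ball and unit sphere. For $x \in S(X)$ and real $\alpha$, the w*-slice is $S(B(X^* ), x, \alpha) := \{g \in B(X^* ) : g(x) > \alpha\}$. An element $f \in S(X^* )$ is a w*-denting point of $B(X^* )$ if for every $\varepsilon>0$ there is a w*-slice $S(B(X^* ),x,\alpha)$ ($x\in S(X)$, $0<\alpha<1$) containing $f$ with diameter less than $\varepsilon$. For $0<t<2$, $f \in S(X^* )$, $x \in S(X)$: $s^*(f,x,t) := \inf\{\|f+h\| - 1 : h \in X^*,\ \|h\| \geq t/4,\ h(x) = 0\}$, and $d^*(f,t) := \sup_{x \in S(X)} s^*(f,x,t)$. *)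

(* Defs.v *)
From HB Require Import structures.
From mathcomp Require Import all_boot all_order all_algebra.
From mathcomp Require Import all_classical all_reals all_analysis.
Set Implicit Arguments. Unset Strict Implicit. Unset Printing Implicit Defensive.
Import Order.TTheory GRing.Theory Num.Theory.
Import numFieldNormedType.Exports.
Local Open Scope classical_set_scope.
Local Open Scope ring_scope.

Section Dual.
Variables (R : realType) (X : normedModType R).

Definition is_dual (f : X -> R) : Prop :=
  (forall (a : R) (u v : X), f (a *: u + v) = a * f u + f v) /\ continuous f.

Definition dnorm (f : X -> R) : R :=
  sup [set `|f u| | u in [set u : X | `|u| <= 1]].

Definition unit_sphere : set X := [set u | `|u| = 1].
Definition dual_ball : set (X -> R) := [set g | is_dual g /\ dnorm g <= 1].
Definition dual_sphere : set (X -> R) := [set g | is_dual g /\ dnorm g = 1].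

Definition wslice (x : X) (alpha : R) : set (X -> R) :=
  [set g | dual_ball g /\ alpha < g x].

Definition ddiam (A : set (X -> R)) : R :=
  sup [set dnorm (g1 - g2) | g1 in A & g2 in A].

Definition wstar_denting (f : X -> R) : Prop :=
  dual_sphere f /\
  forall eps : R, 0 < eps -> exists (x : X) (alpha : R),
    unit_sphere x /\ 0 < alpha < 1 /\ wslice x alpha f /\ ddiam (wslice x alpha) < eps.

(* s^*(f,x,t), valued in extended reals (inf of the empty set = +oo) *)
Definition sstar (f : X -> R) (x : X) (t : R) : \bar R :=
  ereal_inf [set ((dnorm (f + h) - 1)%:E) |
              h in [set h : X -> R | is_dual h /\ t / 4 <= dnorm h /\ h x = 0]].

Definition dstar (f : X -> R) (t : R) : \bar R :=
  ereal_sup [set sstar f x t | x in unit_sphere].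

End Dual.

(* Main.v *)
Require Import Defs.
From HB Require Import structures.
From mathcomp Require Import all_boot all_order all_algebra.
From mathcomp Require Import all_classical all_reals all_analysis.
From mathcomp Require Import ring lra.
Import Order.TTheory GRing.Theory Num.Theory.
Import numFieldNormedType.Exports.
Local Open Scope classical_set_scope.
Local Open Scope ring_scope.

Set Implicit Arguments. Unset Strict Implicit.
Section Helpers.
Variables (R : realType) (X : normedModType R).
Implicit Types (f h g k : X -> R) (x : X).

Lemma lin0 g : is_dual g -> g 0 = 0.
Proof.
move=> [hl _]; have := hl 1 0 0; rewrite scaler0 addr0 mul1r => /eqP.
by rewrite -subr_eq0 opprD addrA subrr sub0r oppr_eq0 => /eqP.
Qed.

Lemma linZ g a u : is_dual g -> g (a *: u) = a * g u.
Proof. move=> hg; have := hg.1 a u 0; by rewrite addr0 (lin0 hg) addr0. Qed.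

Lemma linD g u v : is_dual g -> g (u + v) = g u + g v.
Proof. move=> hg; have := hg.1 1 u v; by rewrite scale1r mul1r. Qed.

Lemma linN g u : is_dual g -> g (- u) = - g u.
Proof. move=> hg; by rewrite -scaleN1r linZ // mulN1r. Qed.

Lemma dual_bounded g : is_dual g -> exists M, forall u : X, `|u| <= 1 -> `|g u| <= M.
Proof.
move=> hg; have hc := hg.2 0.
move: hc => /cvgr_dist_lt/(_ _ ltr01); rewrite (lin0 hg).
move=> /nbhs_norm0P [e /= e0 he].
exists (2 / e) => u hu.
have hu' : `|(e / 2) *: u| < e.
  rewrite normrZ gtr0_norm ?divr_gt0 //.
  apply: (le_lt_trans (y := e / 2 * 1)); first by rewrite ler_wpM2l // ?divr_ge0 // ltW.
  by rewrite mulr1 ltr_pdivrMr // ltr_pMr // ltr1n.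
have := he _ hu'; rewrite /= sub0r normrN linZ // normrM gtr0_norm ?divr_gt0 //.
move=> h; rewrite -(ler_pM2l (_ : 0 < e / 2)) ?divr_gt0 //.
have -> : e / 2 * (2 / e) = 1 by field; rewrite gt_eqF.
exact: ltW.
Qed.

Lemma dnorm_ge g u : is_dual g -> `|u| <= 1 -> `|g u| <= dnorm g.
Proof.
move=> hg hu; have [M hM] := dual_bounded hg.
apply: ub_le_sup; last by exists u.
by exists M => _ [v hv <-]; exact: hM.
Qed.

Lemma dnorm_le g C : (forall u : X, `|u| <= 1 -> `|g u| <= C) -> dnorm g <= C.
Proof.
move=> h; apply: ge_sup; first by exists `|g 0|; exists 0 => //=; rewrite normr0.
by move=> _ [v hv <-]; exact: h.
Qed.

Lemma dnorm_ge0 g : is_dual g -> 0 <= dnorm g.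
Proof. move=> hg; apply: le_trans (dnorm_ge (u := 0) hg _); by rewrite ?normr0. Qed.

Lemma dual_eval g u : is_dual g -> `|g u| <= dnorm g * `|u|.
Proof.
move=> hg; have [->|u0] := eqVneq u 0.
  by rewrite (lin0 hg) !normr0 mulr0.
have nu : 0 < `|u| by rewrite normr_gt0.
have := dnorm_ge (u := `|u|^-1 *: u) hg.
rewrite normrZ normfV normr_id mulVf ?gt_eqF // lexx => /(_ isT).
rewrite linZ // normrM normfV normr_id => h.
by rewrite -ler_pdivrMr // mulrC.
Qed.

Lemma dual_comb g k a b : is_dual g -> is_dual k ->
  is_dual (fun u => a * g u + b * k u).
Proof.
move=> hg hk; split.
  move=> c u v; rewrite hg.1 hk.1; ring.
move=> x; apply: cvgD; apply: cvgMr; [exact: hg.2 | exact: hk.2].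
Qed.

Lemma dnorm_comb g k a b : is_dual g -> is_dual k ->
  dnorm (fun u => a * g u + b * k u) <= `|a| * dnorm g + `|b| * dnorm k.
Proof.
move=> hg hk; apply: dnorm_le => u hu.
apply: le_trans (ler_normD _ _) _; rewrite !normrM.
apply: lerD; apply: ler_wpM2l => //; exact: dnorm_ge.
Qed.

Lemma dnorm_scale_ge g c : 0 < c -> is_dual g -> c * dnorm g <= dnorm (fun u => c * g u).
Proof.
move=> c0 hg.
have hcg : is_dual (fun u => c * g u).
  have -> : (fun u => c * g u) = (fun u => c * g u + 0 * g u) by apply: funext => u; ring.
  exact: dual_comb.
have := dnorm_comb c^-1 0 hcg hcg.
have -> : (fun u => c^-1 * (c * g u) + 0 * (c * g u)) = g.
  by apply: funext => u; field; rewrite gt_eqF.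
rewrite normr0 mul0r addr0 normfV gtr0_norm // => h.
by rewrite mulrC -ler_pdivlMr // mulrC.
Qed.

Lemma dual_dual_sphere g : dual_sphere g -> is_dual g. Proof. by case. Qed.


Lemma fun_addE (f h : X -> R) : f + h = (fun u => 1 * f u + 1 * h u).
Proof. by apply: funext => u; rewrite !mul1r. Qed.

Lemma fun_subE (f h : X -> R) : f - h = (fun u => 1 * f u + (-1) * h u).
Proof. by apply: funext => u; rewrite mul1r mulN1r. Qed.

Lemma dual_add f h : is_dual f -> is_dual h -> is_dual (f + h).
Proof. by move=> ? ?; rewrite fun_addE; exact: dual_comb. Qed.

Lemma dnorm_sub f h : is_dual f -> is_dual h -> dnorm (f - h) <= dnorm f + dnorm h.
Proof.
move=> hf hh; rewrite fun_subE; apply: le_trans (dnorm_comb _ _ hf hh) _.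
by rewrite normrN normr1 !mul1r.
Qed.

Lemma ddiam_le (A : set (X -> R)) C : 0 <= C -> A `<=` @dual_ball R X ->
  (forall g1 g2, A g1 -> A g2 -> dnorm (g1 - g2) <= C) -> ddiam A <= C.
Proof.
move=> C0 hA hC; rewrite /ddiam.
have [[y Sy]|hne] := pselect ([set dnorm (g1 - g2) | g1 in A & g2 in A] !=set0).
  apply: ge_sup; first by exists y.
  by move=> _ [g1 h1 [g2 h2 <-]]; exact: hC.
rewrite (_ : [set _ | g1 in A & g2 in A] = set0) ?sup0 //.
apply/seteqP; split => // z Sz; exfalso; apply: hne; by exists z.
Qed.

Lemma ddiam_ge (A : set (X -> R)) g1 g2 : A `<=` @dual_ball R X -> A g1 -> A g2 ->
  dnorm (g1 - g2) <= ddiam A.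
Proof.
move=> hA h1 h2; apply: ub_le_sup; last by exists g1 => //; exists g2.
exists 2 => _ [k1 k1A [k2 k2A <-]].
have [d1 n1] := hA _ k1A; have [d2 n2] := hA _ k2A.
apply: le_trans (dnorm_sub d1 d2) _; lra.
Qed.

Lemma wslice_ball x a : wslice x a `<=` @dual_ball R X.
Proof. by move=> g []. Qed.

Lemma sstar_le f h x t : is_dual h -> t / 4 <= dnorm h -> h x = 0 ->
  (sstar f x t <= (dnorm (f + h) - 1)%:E)%E.
Proof. by move=> *; apply: ereal_inf_lbound; exists h. Qed.


Lemma dist_bound x f t s g : dual_sphere f -> 0 < f x -> 0 < t < 2 -> 0 < s -> s <= t / 4 ->
  (s%:E <= sstar f x t)%E -> wslice x (f x * (1 - s)) g ->
  dnorm (g - f) * (2 * (1 - s)) <= t.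
Proof.
move=> [df nf] fx0 /andP[t0 t2] s0 st hs [[dg ng] gx].
have gx0 : 0 < g x by apply: lt_trans gx; apply: mulr_gt0 => //; lra.
set l := f x / g x.
have l0 : 0 < l by apply: divr_gt0.
have lgx : l * g x = f x by rewrite /l mulfVK // gt_eqF.
clearbody l.
have l1 : l * (1 - s) < 1.
  rewrite -(ltr_pM2r gx0) mul1r -mulrA [(1 - s) * _]mulrC mulrA lgx.
  exact: gx.
set h := fun u => l * g u + (-1) * f u.
have dh : is_dual h by apply: dual_comb.
set r := dnorm h.
have r0 : 0 <= r by apply: dnorm_ge0.
have hx : h x = 0 by rewrite /h lgx; ring.
have lr : 1 <= l + r.
  have e : f = (fun u => l * g u + (-1) * h u) by apply: funext => u; rewrite /h; ring.
  rewrite -nf {1}e; apply: le_trans (dnorm_comb _ _ dg dh) _.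
  rewrite normrN normr1 mul1r gtr0_norm //; rewrite -/r.
  have := ler_wpM2l (ltW l0) ng; lra.
have gf : dnorm (g - f) <= `|1 - l| + r.
  have -> : g - f = (fun u => (1 - l) * g u + 1 * h u).
    by rewrite fun_subE; apply: funext => u; rewrite /h; ring.
  apply: le_trans (dnorm_comb _ _ dg dh) _; rewrite normr1 mul1r -/r.
  have := ler_wpM2l (normr_ge0 (1 - l)) ng; lra.
have iv : t / 4 <= r -> r * s <= t / 4 * (l - 1).
  move=> tr; have rp : 0 < r by apply: lt_le_trans tr; lra.
  set th := t / (4 * r).
  have th0 : 0 < th by apply: divr_gt0 => //; lra.
  have th1 : th <= 1 by rewrite /th ler_pdivrMr ?mul1r; lra.
  have thr : th * r = t / 4 by rewrite /th; field; rewrite gt_eqF.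
  clearbody th.
  set h' := fun u => th * h u.
  have dh' : is_dual h'.
    have -> : h' = (fun u => th * h u + 0 * h u) by apply: funext => u; rewrite /h'; ring.
    exact: dual_comb.
  have nh' : t / 4 <= dnorm h' by rewrite -thr; exact: dnorm_scale_ge.
  have h'x : h' x = 0 by rewrite /h' hx mulr0.
  have := le_trans hs (sstar_le f dh' nh' h'x); rewrite lee_fin => sh.
  have : dnorm (f + h') <= (1 - th) + th * l.
    have -> : f + h' = (fun u => (1 - th) * f u + (th * l) * g u).
      by rewrite fun_addE; apply: funext => u; rewrite /h' /h; ring.
    apply: le_trans (dnorm_comb _ _ df dg) _.
    rewrite nf mulr1 ger0_norm ?subr_ge0 // gtr0_norm ?mulr_gt0 //.
    have := ler_wpM2l (ltW (mulr_gt0 th0 l0)) ng; lra.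
  move=> hf; have sth : s <= th * (l - 1) by lra.
  have := ler_wpM2l r0 sth; rewrite mulrA (mulrC r th) thr; lra.
apply: le_trans (ler_wpM2r _ gf) _; first lra.
have [l1'|l1'] := lerP l 1.
  idtac.
  have [tr|tr] := ltP r (t / 4).
    nra.
  have := iv tr; nra.
idtac.
have [tr|tr] := ltP r (t / 4).
  nra.
have := iv tr => hiv.
have hsq : s * ((l - 1 + r) * (1 - s)) <= s * (t / 2).
  nra.
by rewrite -(ler_pM2l s0) mulrA (mulrC s) -mulrA; nra.
Qed.


Lemma dual_sub f h : is_dual f -> is_dual h -> is_dual (f - h).
Proof. by move=> ? ?; rewrite fun_subE; exact: dual_comb. Qed.

Lemma slice_diam x f t s : dual_sphere f -> 0 < f x -> 0 < t < 2 -> 0 < s -> s <= t / 4 ->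
  (s%:E <= sstar f x t)%E -> ddiam (wslice x (f x * (1 - s))) < 2 * t.
Proof.
move=> hf fx0 ht s0 st hs.
have s1 : 0 < 1 - s by case/andP: ht => ? ?; lra.
set K := t / (2 * (1 - s)).
have hK : forall g, wslice x (f x * (1 - s)) g -> dnorm (g - f) <= K.
  move=> g hg; rewrite /K ler_pdivlMr ?mulr_gt0 //; exact: dist_bound hg.
apply: (le_lt_trans (y := 2 * K)).
  apply: ddiam_le; [|exact: wslice_ball|].
    rewrite /K mulr_ge0 // divr_ge0 ?mulr_ge0 //; try lra; case/andP: ht => ? ?; lra.
  move=> g1 g2 h1 h2.
  have d1 : is_dual g1 by case: h1 => [[]].
  have d2 : is_dual g2 by case: h2 => [[]].
  have e : g1 - g2 = (fun u => 1 * (g1 - f) u + (-1) * (g2 - f) u).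
    rewrite fun_subE !fun_subE; apply: funext => u; ring.
  rewrite e; apply: le_trans (dnorm_comb _ _ (dual_sub d1 hf.1) (dual_sub d2 hf.1)) _.
  rewrite normrN normr1 !mul1r; have := hK _ h1; have := hK _ h2; lra.
rewrite /K -ltr_pdivlMl // mulKf ?gt_eqF // ltr_pdivrMr ?mulr_gt0 //.
case/andP: ht => ? ?; nra.
Qed.


Lemma sstar_t4 x f t : dual_sphere f -> 0 < t -> (sstar f x t < +oo)%E ->
  (sstar f x t <= (t / 4)%:E)%E.
Proof.
move=> [df nf] t0 hoo.
set S := [set ((dnorm (f + h) - 1)%:E) |
              h in [set h : X -> R | is_dual h /\ t / 4 <= dnorm h /\ h x = 0]].
have [[y [h [dh [nh hx]] _]]|ne] := pselect (S !=set0); last first.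
  exfalso; move: hoo; rewrite /sstar -/S.
  suff -> : ereal_inf S = +oo%E by [].
  apply/ereal_inf_pinfty => y Sy; exfalso; apply: ne; by exists y.
set r := dnorm h.
have r0 : 0 < r by apply: lt_le_trans nh; lra.
set th := t / (4 * r).
have th0 : 0 < th by apply: divr_gt0 => //; lra.
have thr : th * r = t / 4 by rewrite /th; field; rewrite gt_eqF.
clearbody th.
set h1 := fun u => th * h u.
have dh1 : is_dual h1.
  have -> : h1 = (fun u => th * h u + 0 * h u) by apply: funext => u; rewrite /h1; ring.
  exact: dual_comb.
have nh1 : t / 4 <= dnorm h1 by rewrite -thr; exact: dnorm_scale_ge.
have h1x : h1 x = 0 by rewrite /h1 hx mulr0.
apply: le_trans (sstar_le f dh1 nh1 h1x) _; rewrite lee_fin.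
have : dnorm (f + h1) <= 1 + t / 4.
  rewrite fun_addE (_ : (fun u => 1 * f u + 1 * h1 u) = (fun u => 1 * f u + th * h u)); last first.
    by apply: funext => u; rewrite /h1; ring.
  apply: le_trans (dnorm_comb _ _ df dh) _.
  by rewrite normr1 mul1r nf gtr0_norm // -/r thr.
lra.
Qed.


Lemma denting_pos f t : wstar_denting f -> 0 < t < 2 -> (0 < dstar f t)%E.
Proof.
move=> [[df nf] hd] /andP[t0 t2].
have [x [a [ux [/andP[a0 a1] [[_ afx] hdiam]]]]] := hd (t / 8) (ltac:(lra)).
have fx0 : 0 < f x by apply: lt_trans afx.
set c := Num.min (f x / a - 1) (t / 8).
have c0 : 0 < c.
  rewrite /c lt_min; apply/andP; split; last lra.
  by rewrite subr_gt0 ltr_pdivlMr // mul1r.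
have cle1 : c <= f x / a - 1 by rewrite /c ge_min lexx.
have cle2 : c <= t / 8 by rewrite /c ge_min lexx orbT.
clearbody c.
apply: (lt_le_trans (y := c%:E)); first by rewrite lte_fin.
apply: (le_trans (y := sstar f x t)); last by apply: ereal_sup_ubound; exists x.
apply: le_ereal_inf_tmp => _ [h [dh [nh hx]] <-]; rewrite lee_fin.
set n := dnorm (f + h).
have dfh : is_dual (f + h) by exact: dual_add.
have fhx : (f + h) x = f x by rewrite fun_addE /= hx !mul1r addr0.
rewrite leNgt; apply/negP => hn.
have [n1|n1] := lerP n 1.
  have inS : wslice x a (f + h) by split => //; rewrite fhx.
  have fS : wslice x a f by split => //; split => //; rewrite nf.
  have := ddiam_ge (@wslice_ball x a) inS fS.
  have -> : f + h - f = h.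
    by rewrite fun_subE fun_addE; apply: funext => u /=; ring.
  lra.
have n0 : 0 < n by lra.
set g := fun u => n^-1 * (f + h) u + 0 * (f + h) u.
have dg : is_dual g by exact: dual_comb.
have ng : dnorm g <= 1.
  apply: le_trans (dnorm_comb _ _ dfh dfh) _.
  by rewrite normr0 mul0r addr0 normfV gtr0_norm // mulVf ?gt_eqF.
have gx : a < g x.
  rewrite /g fhx mul0r addr0 mulrC ltr_pdivlMr //.
  have : n < f x / a by lra.
  by rewrite ltr_pdivlMr // mulrC.
have inS : wslice x a g by split.
have fS : wslice x a f by split => //; split => //; rewrite nf.
have := ddiam_ge (@wslice_ball x a) inS fS => hgf.
have dgf : is_dual (g - f) by exact: dual_sub.
have eh : h = (fun u => (n - 1) * g u + 1 * (g - f) u).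
  rewrite fun_subE; apply: funext => u; rewrite /g fun_addE /=.
  by field; rewrite gt_eqF.
have := dnorm_comb (n - 1) 1 dg dgf; rewrite -eh normr1 mul1r gtr0_norm ?subr_gt0 //.
have := ler_wpM2l (_ : 0 <= n - 1) ng; last lra.

Qed.

Lemma sstarN f x t : sstar f (- x) t = sstar f x t.
Proof.
rewrite /sstar; congr ereal_inf; apply/seteqP; split => _ [h [dh [nh hx]] <-];
  exists h => //; split => //; split => //.
  by move: hx; rewrite linN // => /eqP; rewrite oppr_eq0 => /eqP.
by rewrite linN // hx oppr0.
Qed.

Lemma pos_denting f : dual_sphere f ->
  (forall t, 0 < t < 2 -> (0 < dstar f t)%E) -> wstar_denting f.
Proof.
move=> hf hpos; split => // eps e0.
have [df nf] := hf.
set t := Num.min (eps / 4) 1.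
have t0 : 0 < t by rewrite /t lt_min; apply/andP; split; lra.
have te : t <= eps / 4 by rewrite /t ge_min lexx.
have t1 : t <= 1 by rewrite /t ge_min lexx orbT.
clearbody t.
have := hpos t (ltac:(apply/andP; split; lra)).
move=> /ereal_sup_gt [_ [x ux <-] hs].
have fx0 : f x != 0.
  apply/negP => /eqP fx0.
  set h := fun u => (-1) * f u + 0 * f u.
  have dh : is_dual h by exact: dual_comb.
  have nh : t / 4 <= dnorm h.
    have : dnorm f <= dnorm h.
      have -> : f = (fun u => (-1) * h u + 0 * h u) by apply: funext => u; rewrite /h; ring.
      apply: le_trans (dnorm_comb _ _ dh dh) _.
      by rewrite normrN normr1 mul1r normr0 mul0r addr0.
    rewrite nf; lra.
  have hx : h x = 0 by rewrite /h fx0; ring.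
  have := sstar_le f dh nh hx.
  have -> : f + h = (fun u => 0 * f u + 0 * f u) by rewrite fun_addE; apply: funext => u; rewrite /h; ring.
  have : dnorm (fun u => 0 * f u + 0 * f u) <= 0.
    by apply: le_trans (dnorm_comb _ _ df df) _; rewrite normr0 !mul0r addr0.
  move=> h0 h1; have := lt_le_trans hs h1; rewrite lte_fin; lra.
have [x' [ux' [fx' hs']]] : exists x', unit_sphere x' /\ 0 < f x' /\ (0 < sstar f x' t)%E.
  have [fxp|fxn] := ltP 0 (f x); first by exists x.
  exists (- x); split; first by rewrite /unit_sphere /= normrN.
  split; last by rewrite sstarN.
  rewrite linN // oppr_gt0 lt_neqAle fxn andbT; exact: fx0.
have [s [s0 [st hss]]] : exists s, 0 < s /\ s <= t / 4 /\ (s%:E <= sstar f x' t)%E.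
  move: hs'; case E: (sstar f x' t) => [r| |] // hr; first rewrite lte_fin in hr.
    exists (Num.min (t / 4) r); split; first by rewrite lt_min; apply/andP; split; lra.
    by split; [rewrite ge_min lexx | rewrite lee_fin ge_min lexx orbT].
  by exists (t / 4); split; [lra | split; [lra | exact: leey]].
have fx1 : f x' <= 1.
  have := dual_eval x' df; rewrite nf ux' mulr1 => h; apply: le_trans h; exact: ler_norm.
exists x', (f x' * (1 - s)); split => //; split.
  apply/andP; split; first by apply: mulr_gt0 => //; lra.
  nra.
split; first by split; [split => //; rewrite nf | nra].
apply: lt_le_trans (slice_diam hf fx' _ s0 st hss) _; first by apply/andP; split; lra.
lra.
Qed.

End Helpers.

Theorem mainTheorem3 (R : realType) (X : completeNormedModType R) :
  (forall (x : X) (f : X -> R) (t : R),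
      unit_sphere x -> dual_sphere f -> 0 < f x -> 0 < t < 2 ->
      (0 < sstar f x t)%E -> (sstar f x t < +oo)%E ->
      ddiam (wslice x (f x * (1 - fine (sstar f x t)))) < 2 * t)
  /\
  (forall f : X -> R, dual_sphere f ->
      (wstar_denting f <-> forall t : R, 0 < t < 2 -> (0 < dstar f t)%E)).
Proof.
split.
  move=> x f t ux hf fx0 ht hs0 hoo.
  have t0 : 0 < t by case/andP: ht.
  have h4 := sstar_t4 hf t0 hoo.
  move: hs0 hoo h4; case E: (sstar f x t) => [r| |] //= hr _ h4.
  rewrite lte_fin in hr; rewrite lee_fin in h4.
  apply: slice_diam => //; by rewrite E.
move=> f hf; split; first by move=> hd t ht; exact: denting_pos.
exact: pos_denting.
Qed.
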